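(* Let $N\ge3$, $K(r)\equiv r^{\alpha}$ with $\alpha>-2$, and $p>p_S(\alpha)$. Assume $f$ satisfies (F0) and (F$\infty$). Then there exists $\mu_1>0$ such that for every $\mu\in[0,\mu_1)$, $(E_\mu)$ has a singular slow-decay solution.
   Context: $f:(0,\infty)\to[0,\infty)$ is continuous, not identically zero, and satisfies (F0): $f(r)=O(r^{\nu})$ as $r\to0$ for some $\nu>-2$; (F$\infty$): $f(r)=O(r^{-q})$ as $r\to\infty$ for some $q>N$. For $\mu\ge0$, $(E_\mu)$ is $u''+\frac{N-1}{r}u'+K(r)u^p+\mu f(r)=0$, $u>0$ for $r>0$. A singular solution is $u\in C^2(0,\infty)$ satisfying $(E_\mu)$ pointwise on $(0,\infty)$ with $\lim_{r\to0}u(r)=\infty$. It is slow-decay if $\limsup_{r\to\infty}r^{N-2}u(r)=\infty$. $p_S(\alpha):=\frac{N+2+2\alpha}{N-2}$. *)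

(* Defs.v *)
From Stdlib Require Import Reals.
From Coquelicot Require Import Coquelicot.
Open Scope R_scope.

Definition pS (N : nat) (alpha : R) : R := (INR N + 2 + 2 * alpha) / (INR N - 2).

Definition admissible_f (f : R -> R) : Prop :=
  (forall r, 0 < r -> continuous f r) /\
  (forall r, 0 < r -> 0 <= f r) /\
  (exists r, 0 < r /\ f r <> 0).

Definition F0 (f : R -> R) : Prop :=
  exists nu, -2 < nu /\ exists C delta, 0 < delta /\
    forall r, 0 < r < delta -> Rabs (f r) <= C * Rpower r nu.

Definition Finf (N : nat) (f : R -> R) : Prop :=
  exists q, INR N < q /\ exists C R0,
    forall r, R0 < r -> 0 < r -> Rabs (f r) <= C * Rpower r (- q).

Definition singular_solution (N : nat) (alpha p mu : R) (f u : R -> R) : Prop :=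
  exists u1 u2 : R -> R,
    (forall r, 0 < r ->
       is_derive u r (u1 r) /\ is_derive u1 r (u2 r) /\ continuous u2 r /\
       0 < u r /\
       u2 r + (INR N - 1) / r * u1 r + Rpower r alpha * Rpower (u r) p + mu * f r = 0) /\
    filterlim u (at_right 0) (Rbar_locally p_infty).

Definition slow_decay (N : nat) (u : R -> R) : Prop :=
  forall M R0 : R, exists r, R0 < r /\ 0 < r /\ M < r ^ (N - 2) * u r.

(* Main.v *)
Require Import Defs.
From Stdlib Require Import Reals Lra Lia ZArith FunctionalExtensionality.
From Coquelicot Require Import Coquelicot.
Open Scope R_scope.

Lemma cont_of_eps (f : R -> R) x :
  (forall eps, 0 < eps -> exists d, 0 < d /\ forall y, Rabs (y - x) < d -> Rabs (f y - f x) < eps) ->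
  continuous f x.
Proof.
  intros H. apply continuity_pt_filterlim.
  intros eps Heps. destruct (H eps Heps) as [d [Hd Hy]].
  exists d; split; auto. intros y [_ Hy']. apply Hy. exact Hy'.
Qed.

Lemma eps_of_cont (f : R -> R) x : continuous f x ->
  forall eps, 0 < eps -> exists d, 0 < d /\ forall y, Rabs (y - x) < d -> Rabs (f y - f x) < eps.
Proof.
  intros H. apply continuity_pt_filterlim in H.
  intros eps Heps. destruct (H eps Heps) as [d [Hd Hy]].
  exists d; split; auto. intros y Hy'.
  destruct (Req_dec y x) as [->|Hne].
  - rewrite Rminus_eq_0, Rabs_R0; auto.
  - apply Hy. split; [unfold D_x, no_cond; auto|exact Hy'].
Qed.

Lemma nat_unbounded x : exists n : nat, x < INR n.
Proof.
  destruct (Rle_or_lt x 0) as [H|H].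
  - exists 1%nat. simpl. lra.
  - exists (Z.to_nat (up x)). destruct (archimed x) as [H1 _].
    rewrite INR_IZR_INZ. rewrite Z2Nat.id; auto.
    apply le_IZR. lra.
Qed.
Lemma cmul (f g : R -> R) x : continuous f x -> continuous g x -> continuous (fun y => f y * g y) x.
Proof. intros; apply (continuous_mult f g); auto. Qed.
Lemma cplus (f g : R -> R) x : continuous f x -> continuous g x -> continuous (fun y => f y + g y) x.
Proof. intros; apply (continuous_plus f g); auto. Qed.
Lemma cminus (f g : R -> R) x : continuous f x -> continuous g x -> continuous (fun y => f y - g y) x.
Proof. intros; apply (continuous_minus f g); auto. Qed.

Lemma ex_RInt_c (G : R -> R) x y : (forall s, continuous G s) -> ex_RInt G x y.
Proof. intros H; apply (@ex_RInt_continuous R_CompleteNormedModule); intros; apply H. Qed.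

Lemma RInt_exp_val c B x y : 0 < c ->
  RInt (fun s => B * exp (c*s)) x y = B/c * (exp(c*y) - exp(c*x)).
Proof.
  intros Hc. apply is_RInt_unique.
  replace (B / c * (exp (c * y) - exp (c * x))) with (minus (B/c*exp(c*y)) (B/c*exp(c*x)))
    by (unfold minus, plus, opp; simpl; ring).
  apply (is_RInt_derive (fun s => B/c*exp(c*s))).
  - intros s _. auto_derive; auto. field. lra.
  - intros s _. apply cmul. apply continuous_const. apply continuous_exp_comp.
    apply (ex_derive_continuous (fun s => c*s)). auto_derive; auto.
Qed.

Lemma RInt_abs_bound G c B x y : 0 < c -> (forall s, continuous G s) ->
  (forall s, Rabs (G s) <= B * exp (c*s)) -> x <= y ->
  Rabs (RInt G x y) <= B/c * exp(c*y).
Proof.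
  intros Hc HG HB Hxy.
  eapply Rle_trans. apply abs_RInt_le; auto. apply ex_RInt_c; auto.
  eapply Rle_trans. apply (RInt_le _ (fun s => B * exp (c*s)) x y Hxy).
  - apply ex_RInt_c. intros s; apply continuous_Rabs_comp; auto.
  - apply ex_RInt_c. intros s. apply cmul. apply continuous_const. apply continuous_exp_comp.
    apply (ex_derive_continuous (fun s => c*s)). auto_derive; auto.
  - intros s _; apply HB.
  - rewrite RInt_exp_val; auto.
    assert (0 <= B). { specialize (HB 0). pose proof (Rabs_pos (G 0)). pose proof (exp_pos (c*0)). nra. }
    pose proof (exp_pos (c*x)). assert (0 <= B/c) by (apply Rdiv_le_0_compat; lra). nra.
Qed.

Definition Imp (G : R -> R) (t : R) : R := real (Lim_seq (fun n => RInt G (- INR n) t)).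

Lemma Imp_lim G c B t : 0 < c -> (forall s, continuous G s) ->
  (forall s, Rabs (G s) <= B * exp (c*s)) ->
  is_lim_seq (fun n => RInt G (- INR n) t) (Imp G t).
Proof.
  intros Hc HG HB.
  assert (HB0 : 0 <= B). { specialize (HB 0). pose proof (Rabs_pos (G 0)). pose proof (exp_pos (c*0)). nra. }
  assert (Hcv : ex_finite_lim_seq (fun n => RInt G (- INR n) t)).
  { apply ex_lim_seq_cauchy_corr. intros eps.
    destruct (nat_unbounded (B / (c * c * eps))) as [N0 HN0].
    exists N0. intros n m Hn Hm.
    assert (key : forall n m, (N0 <= n)%nat -> (N0 <= m)%nat -> (m <= n)%nat ->
        Rabs (RInt G (- INR n) t - RInt G (- INR m) t) < eps).
    { clear n m Hn Hm. intros n m Hn Hm Hmn.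
      assert (E : RInt G (- INR n) t = RInt G (- INR n) (- INR m) + RInt G (- INR m) t).
      { symmetry. apply (RInt_Chasles (V:=R_CompleteNormedModule)); apply ex_RInt_c; auto. }
      rewrite E. assert (Eq2 : forall u v : R, u + v - v = u) by (intros; ring). rewrite Eq2.
      apply (Rle_lt_trans _ (B/c*exp(c*(-INR m)))).
      { apply (RInt_abs_bound G c B); auto. apply Ropp_le_contravar, le_INR; auto. }
      assert (INR N0 <= INR m) by (apply le_INR; auto).
      assert (Hex : 1 + c * INR m <= exp (c * INR m)).
      { destruct (Req_dec (c * INR m) 0) as [E0|E0]. rewrite E0, exp_0; lra.
        left. apply exp_ineq1. pose proof (pos_INR m). nra. }
      replace (exp (c * - INR m)) with (/ exp (c * INR m)).
      2:{ rewrite <- exp_Ropp. f_equal. ring. }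
      pose proof (pos_INR m). pose proof (cond_pos eps).
      assert (0 < exp (c * INR m)) by apply exp_pos.
      assert (B / (c*c*eps) < INR m) by lra.
      apply Rmult_lt_reg_r with (exp (c * INR m)); auto.
      replace (B / c * / exp (c * INR m) * exp (c * INR m)) with (B/c) by (field; lra).
      assert (B < c*c*eps * INR m).
      { apply Rmult_lt_reg_r with (/(c*c*eps)). apply Rinv_0_lt_compat. apply Rmult_lt_0_compat; nra.
        replace (c*c*eps*INR m * / (c*c*eps)) with (INR m) by (field; split; lra). exact H3. }
      apply Rmult_lt_reg_r with c; auto. replace (B/c*c) with B by (field; lra).
      assert (c*INR m < exp (c*INR m)) by lra. assert (0 < eps*c) by nra.
      assert (eps*c*(c*INR m) < eps*c*exp (c*INR m)) by (apply Rmult_lt_compat_l; auto). nra. }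
    destruct (Nat.le_ge_cases m n) as [H|H].
    - apply key; auto.
    - rewrite Rabs_minus_sym. apply key; auto. }
  destruct Hcv as [l Hl]. unfold Imp. rewrite (is_lim_seq_unique _ _ Hl). simpl. exact Hl.
Qed.

Lemma RInt_lin (G1 G2 : R -> R) k1 k2 x y : (forall s, continuous G1 s) -> (forall s, continuous G2 s) ->
  RInt (fun s => k1 * G1 s + k2 * G2 s) x y = k1 * RInt G1 x y + k2 * RInt G2 x y.
Proof.
  intros H1 H2.
  rewrite (RInt_plus (V:=R_CompleteNormedModule) (fun s => k1 * G1 s) (fun s => k2 * G2 s)).
  - rewrite (RInt_scal (V:=R_CompleteNormedModule) G1), (RInt_scal (V:=R_CompleteNormedModule) G2).
    reflexivity. apply ex_RInt_c; auto. apply ex_RInt_c; auto.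
  - apply ex_RInt_c; intros; apply cmul; auto; apply continuous_const.
  - apply ex_RInt_c; intros; apply cmul; auto; apply continuous_const.
Qed.

Lemma Imp_lin G1 G2 k1 k2 c1 B1 c2 B2 t : 0 < c1 -> 0 < c2 ->
  (forall s, continuous G1 s) -> (forall s, Rabs (G1 s) <= B1 * exp (c1*s)) ->
  (forall s, continuous G2 s) -> (forall s, Rabs (G2 s) <= B2 * exp (c2*s)) ->
  Imp (fun s => k1 * G1 s + k2 * G2 s) t = k1 * Imp G1 t + k2 * Imp G2 t.
Proof.
  intros Hc1 Hc2 HG1 HB1 HG2 HB2.
  pose proof (Imp_lim G1 c1 B1 t Hc1 HG1 HB1) as L1.
  pose proof (Imp_lim G2 c2 B2 t Hc2 HG2 HB2) as L2.
  assert (L : is_lim_seq (fun n => RInt (fun s => k1 * G1 s + k2 * G2 s) (- INR n) t)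
                (k1 * Imp G1 t + k2 * Imp G2 t)).
  { apply (is_lim_seq_ext (fun n => k1 * RInt G1 (- INR n) t + k2 * RInt G2 (- INR n) t)).
    - intros n; rewrite RInt_lin; auto.
    - apply is_lim_seq_plus'. apply (is_lim_seq_scal_l _ k1 (Imp G1 t)); auto.
      apply (is_lim_seq_scal_l _ k2 (Imp G2 t)); auto. }
  unfold Imp at 1. rewrite (is_lim_seq_unique _ _ L). reflexivity.
Qed.

Lemma Imp_split G c B t : 0 < c -> (forall s, continuous G s) ->
  (forall s, Rabs (G s) <= B * exp (c*s)) -> Imp G t = Imp G 0 + RInt G 0 t.
Proof.
  intros Hc HG HB.
  pose proof (Imp_lim G c B 0 Hc HG HB) as L0.
  assert (L : is_lim_seq (fun n => RInt G (- INR n) t) (Imp G 0 + RInt G 0 t)).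
  { apply (is_lim_seq_ext (fun n => RInt G (- INR n) 0 + RInt G 0 t)).
    - intros n. apply (RInt_Chasles (V:=R_CompleteNormedModule)); apply ex_RInt_c; auto.
    - apply is_lim_seq_plus'; auto. apply is_lim_seq_const. }
  unfold Imp at 1. rewrite (is_lim_seq_unique _ _ L). reflexivity.
Qed.

Lemma Imp_derive G c B t : 0 < c -> (forall s, continuous G s) ->
  (forall s, Rabs (G s) <= B * exp (c*s)) -> is_derive (Imp G) t (G t).
Proof.
  intros Hc HG HB.
  apply (is_derive_ext (fun t => Imp G 0 + RInt G 0 t)).
  { intros; symmetry; apply (Imp_split G c B); auto. }
  replace (G t) with (0 + G t) by ring.
  apply (is_derive_plus (fun _ => Imp G 0) (fun t => RInt G 0 t)).
  exact (is_derive_const (K:=R_AbsRing) (V:=R_NormedModule) (Imp G 0) t).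
  apply (is_derive_RInt G (fun t => RInt G 0 t) 0 t).
  - apply filter_forall; intros; apply (RInt_correct (V:=R_CompleteNormedModule)); apply ex_RInt_c; auto.
  - auto.
Qed.

Lemma dmul (f g : R -> R) x df dg : is_derive f x df -> is_derive g x dg ->
  is_derive (fun y => f y * g y) x (df * g x + f x * dg).
Proof. intros; apply (is_derive_mult f g); auto. intros; apply Rmult_comm. Qed.
Lemma dplus (f g : R -> R) x df dg : is_derive f x df -> is_derive g x dg ->
  is_derive (fun y => f y + g y) x (df + dg).
Proof. intros; apply (is_derive_plus f g); auto. Qed.
Lemma dminus (f g : R -> R) x df dg : is_derive f x df -> is_derive g x dg ->
  is_derive (fun y => f y - g y) x (df - dg).
Proof. intros; apply (is_derive_minus f g); auto. Qed.

Lemma sin_abs_le x : 0 <= x -> Rabs (sin x) <= x.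
Proof.
  intros Hx.
  destruct (MVT_gen sin 0 x cos) as [c [_ Hc]].
  - intros; apply is_derive_sin.
  - intros; apply continuity_sin.
  - rewrite sin_0, !Rminus_0_r in Hc. rewrite Hc.
    rewrite Rabs_mult, (Rabs_right x) by lra.
    pose proof (COS_bound c). assert (Rabs (cos c) <= 1) by (apply Rabs_le; lra). nra.
Qed.

Lemma exp_cancel x : exp (- x) * exp x = 1.
Proof. rewrite <- exp_plus. replace (-x + x) with 0 by ring. apply exp_0. Qed.

Lemma cont_lin (c : R) x : continuous (fun s => c * s) x.
Proof. apply (ex_derive_continuous (fun s => c*s)). auto_derive; auto. Qed.

Section Kern.
Variables a w : R.
Hypothesis Ha : 0 < a.
Hypothesis Hw : 0 < w.

Definition Ec (G : R -> R) s := exp ((a/2)*s) * (cos (w*s) * G s).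
Definition Es (G : R -> R) s := exp ((a/2)*s) * (sin (w*s) * G s).
Definition TT (G : R -> R) t := exp (-((a/2)*t)) / w * (sin (w*t) * Imp (Ec G) t - cos (w*t) * Imp (Es G) t).
Definition PS (G : R -> R) t := exp (-((a/2)*t)) * (cos (w*t) * Imp (Ec G) t + sin (w*t) * Imp (Es G) t).

Lemma Ec_cont G s : (forall s, continuous G s) -> continuous (Ec G) s.
Proof.
  intros HG. unfold Ec. apply cmul. apply continuous_exp_comp, cont_lin.
  apply cmul; auto. apply (continuous_comp (fun s => w*s) cos). apply cont_lin. apply continuous_cos.
Qed.
Lemma Es_cont G s : (forall s, continuous G s) -> continuous (Es G) s.
Proof.
  intros HG. unfold Es. apply cmul. apply continuous_exp_comp, cont_lin.
  apply cmul; auto. apply continuous_sin_comp. apply cont_lin.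
Qed.
Lemma Ec_bound G B s : (forall s, Rabs (G s) <= B) -> Rabs (Ec G s) <= B * exp ((a/2)*s).
Proof.
  intros HB. unfold Ec. rewrite !Rabs_mult. rewrite (Rabs_right (exp _)) by (left; apply exp_pos).
  pose proof (exp_pos ((a/2)*s)). pose proof (HB s). pose proof (Rabs_pos (G s)).
  pose proof (COS_bound (w*s)). assert (Rabs (cos (w*s)) <= 1) by (apply Rabs_le; lra).
  pose proof (Rabs_pos (cos (w*s))).
  assert (Rabs (cos (w*s)) * Rabs (G s) <= B) by (rewrite <- (Rmult_1_l B); apply Rmult_le_compat; auto).
  rewrite (Rmult_comm B). apply Rmult_le_compat_l; lra.
Qed.
Lemma Es_bound G B s : (forall s, Rabs (G s) <= B) -> Rabs (Es G s) <= B * exp ((a/2)*s).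
Proof.
  intros HB. unfold Es. rewrite !Rabs_mult. rewrite (Rabs_right (exp _)) by (left; apply exp_pos).
  pose proof (exp_pos ((a/2)*s)). pose proof (HB s). pose proof (Rabs_pos (G s)).
  pose proof (SIN_bound (w*s)). assert (Rabs (sin (w*s)) <= 1) by (apply Rabs_le; lra).
  pose proof (Rabs_pos (sin (w*s))).
  assert (Rabs (sin (w*s)) * Rabs (G s) <= B) by (rewrite <- (Rmult_1_l B); apply Rmult_le_compat; auto).
  rewrite (Rmult_comm B). apply Rmult_le_compat_l; lra.
Qed.

Definition Kf (G : R -> R) t s := exp ((a/2)*s) * (sin (w*(t-s)) * G s).

Lemma Kf_cont G t s : (forall s, continuous G s) -> continuous (Kf G t) s.
Proof.
  intros HG. unfold Kf. apply cmul. apply continuous_exp_comp, cont_lin.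
  apply cmul; auto. apply continuous_sin_comp.
  apply (ex_derive_continuous (fun s => w*(t-s))). auto_derive; auto.
Qed.

Lemma Kseq_bound G B t (n : nat) : (forall s, continuous G s) -> (forall s, Rabs (G s) <= B) ->
  - INR n <= t ->
  Rabs (exp (-((a/2)*t)) / w * RInt (Kf G t) (- INR n) t) <= 4 * B / (a*a).
Proof.
  intros HG HB Hn.
  assert (HB0 : 0 <= B) by (pose proof (HB 0); pose proof (Rabs_pos (G 0)); lra).
  set (F := fun s => B*w*(exp ((a/2)*s)*(2*(t-s)/a + 4/(a*a)))).
  assert (HI : RInt (fun s => B*w*((t-s)*exp ((a/2)*s))) (- INR n) t = F t - F (- INR n)).
  { apply is_RInt_unique.
    replace (F t - F (- INR n)) with (minus (F t) (F (- INR n))) by (unfold minus, plus, opp; simpl; ring).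
    apply (is_RInt_derive F).
    - intros s _. unfold F. auto_derive; auto. field. lra.
    - intros s _. apply (ex_derive_continuous (fun s => B*w*((t-s)*exp ((a/2)*s)))). auto_derive; auto. }
  assert (Hle : Rabs (RInt (Kf G t) (- INR n) t) <= F t - F (- INR n)).
  { rewrite <- HI.
    eapply Rle_trans. apply abs_RInt_le; auto. apply ex_RInt_c; intros; apply Kf_cont; auto.
    apply (RInt_le _ _ _ _ Hn).
    - apply ex_RInt_c. intros s; apply continuous_Rabs_comp; apply Kf_cont; auto.
    - apply ex_RInt_c. intros s. apply (ex_derive_continuous (fun s => B*w*((t-s)*exp ((a/2)*s)))). auto_derive; auto.
    - intros s [_ Hs]. unfold Kf. rewrite !Rabs_mult. rewrite (Rabs_right (exp _)) by (left; apply exp_pos).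
      pose proof (exp_pos ((a/2)*s)). pose proof (HB s). pose proof (Rabs_pos (G s)).
      assert (Rabs (sin (w*(t-s))) <= w*(t-s)) by (apply sin_abs_le; nra).
      pose proof (Rabs_pos (sin (w*(t-s)))).
      assert (Rabs (sin (w * (t - s))) * Rabs (G s) <= w*(t-s) * B).
      { apply Rmult_le_compat; auto. }
      nra. }
  assert (HF0 : 0 <= F (- INR n)).
  { unfold F. pose proof (exp_pos ((a/2)*(- INR n))).
    assert (0 <= 2*(t - - INR n)/a) by (apply Rdiv_le_0_compat; lra).
    assert (0 < 4/(a*a)) by (apply Rdiv_lt_0_compat; nra).
    assert (0 <= B*w) by nra. apply Rmult_le_pos; auto. nra. }
  rewrite Rabs_mult.
  rewrite (Rabs_right (exp (-((a/2)*t)) / w)) by (left; apply Rdiv_lt_0_compat; auto; apply exp_pos).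
  assert (HFt : F t = B*w*(exp ((a/2)*t)*(4/(a*a)))) by (unfold F; field; lra).
  apply Rle_trans with (exp (-((a/2)*t)) / w * (F t)).
  - apply Rmult_le_compat_l. left; apply Rdiv_lt_0_compat; auto; apply exp_pos. lra.
  - rewrite HFt. pose proof (exp_cancel ((a/2)*t)).
    replace (exp (- (a / 2 * t)) / w * (B * w * (exp (a / 2 * t) * (4 / (a * a)))))
      with ((exp (- (a / 2 * t)) * exp (a / 2 * t)) * (4 * B / (a*a))) by (field; lra).
    rewrite H. lra.
Qed.


Lemma TT_lim G B t : (forall s, continuous G s) -> (forall s, Rabs (G s) <= B) ->
  is_lim_seq (fun n => exp (-((a/2)*t)) / w * RInt (Kf G t) (- INR n) t) (TT G t).
Proof.
  intros HG HB.
  assert (Ha2 : 0 < a/2) by lra.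
  pose proof (Imp_lim (Ec G) (a/2) B t Ha2 (fun s => Ec_cont G s HG) (fun s => Ec_bound G B s HB)) as L1.
  pose proof (Imp_lim (Es G) (a/2) B t Ha2 (fun s => Es_cont G s HG) (fun s => Es_bound G B s HB)) as L2.
  unfold TT.
  apply (is_lim_seq_scal_l _ (exp (-((a/2)*t)) / w) (sin (w*t) * Imp (Ec G) t - cos (w*t) * Imp (Es G) t)).
  apply (is_lim_seq_ext (fun n => sin (w*t) * RInt (Ec G) (- INR n) t + (- cos (w*t)) * RInt (Es G) (- INR n) t)).
  - intros n. rewrite <- RInt_lin. apply RInt_ext. intros s _. unfold Kf, Ec, Es.
    replace (w*(t-s)) with (w*t - w*s) by ring. rewrite sin_minus.
    match goal with |- ?x = ?y => change (@eq R x y) end; ring.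
    intros; apply Ec_cont; auto. intros; apply Es_cont; auto.
  - replace (sin (w * t) * Imp (Ec G) t - cos (w * t) * Imp (Es G) t) with
      (sin (w * t) * Imp (Ec G) t + (- cos (w * t)) * Imp (Es G) t) by ring.
    apply is_lim_seq_plus'. apply (is_lim_seq_scal_l _ _ (Imp (Ec G) t)); auto.
    apply (is_lim_seq_scal_l _ _ (Imp (Es G) t)); auto.
Qed.

Lemma TT_bound G B t : (forall s, continuous G s) -> (forall s, Rabs (G s) <= B) ->
  Rabs (TT G t) <= 4 * B / (a*a).
Proof.
  intros HG HB.
  pose proof (is_lim_seq_abs _ _ (TT_lim G B t HG HB)) as L.
  assert (Ev : eventually (fun n => Rabs (exp (-((a/2)*t)) / w * RInt (Kf G t) (- INR n) t) <= 4 * B / (a*a))).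
  { destruct (nat_unbounded (- t)) as [N0 HN0]. exists N0. intros n Hn.
    apply Kseq_bound; auto. assert (INR N0 <= INR n) by (apply le_INR; auto). lra. }
  pose proof (is_lim_seq_le_loc _ (fun _ => 4 * B / (a*a)) _ _ Ev L (is_lim_seq_const _)) as Hle.
  simpl in Hle. exact Hle.
Qed.

Lemma TT_minus G1 G2 B1 B2 t : (forall s, continuous G1 s) -> (forall s, Rabs (G1 s) <= B1) ->
  (forall s, continuous G2 s) -> (forall s, Rabs (G2 s) <= B2) ->
  TT G1 t - TT G2 t = TT (fun s => G1 s - G2 s) t.
Proof.
  intros H1 B1' H2 B2'.
  assert (Ha2 : 0 < a/2) by lra.
  unfold TT.
  assert (E1 : Imp (Ec (fun s => G1 s - G2 s)) t = 1 * Imp (Ec G1) t + (-1) * Imp (Ec G2) t).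
  { rewrite <- (Imp_lin (Ec G1) (Ec G2) 1 (-1) (a/2) B1 (a/2) B2 t); auto.
    f_equal. apply functional_extensionality; intros s; unfold Ec; ring.
    intros; apply Ec_cont; auto. intros; apply Ec_bound; auto.
    intros; apply Ec_cont; auto. intros; apply Ec_bound; auto. }
  assert (E2 : Imp (Es (fun s => G1 s - G2 s)) t = 1 * Imp (Es G1) t + (-1) * Imp (Es G2) t).
  { rewrite <- (Imp_lin (Es G1) (Es G2) 1 (-1) (a/2) B1 (a/2) B2 t); auto.
    f_equal. apply functional_extensionality; intros s; unfold Es; ring.
    intros; apply Es_cont; auto. intros; apply Es_bound; auto.
    intros; apply Es_cont; auto. intros; apply Es_bound; auto. }
  rewrite E1, E2. ring.
Qed.

Lemma TT_derive G B t : (forall s, continuous G s) -> (forall s, Rabs (G s) <= B) ->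
  is_derive (TT G) t (-(a/2) * TT G t + PS G t).
Proof.
  intros HG HB.
  assert (Ha2 : 0 < a/2) by lra.
  pose proof (Imp_derive (Ec G) (a/2) B t Ha2 (fun s => Ec_cont G s HG) (fun s => Ec_bound G B s HB)) as D1.
  pose proof (Imp_derive (Es G) (a/2) B t Ha2 (fun s => Es_cont G s HG) (fun s => Es_bound G B s HB)) as D2.
  assert (DE : is_derive (fun t => exp (-((a/2)*t)) / w) t (-(a/2) * (exp (-((a/2)*t)) / w))).
  { auto_derive; auto. field. lra. }
  assert (DS : is_derive (fun t => sin (w*t)) t (w * cos (w*t))).
  { auto_derive; auto. ring. }
  assert (DC : is_derive (fun t => cos (w*t)) t (- w * sin (w*t))).
  { auto_derive; auto. ring. }
  unfold TT.
  eapply is_derive_ext. { intros; reflexivity. }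
  match goal with |- is_derive _ _ ?d => set (dd := d) end.
  eapply (is_derive_ext_loc); [apply filter_forall; intros; reflexivity|].
  pose proof (dmul _ _ t _ _ DE (dminus _ _ t _ _ (dmul _ _ t _ _ DS D1) (dmul _ _ t _ _ DC D2))) as DD.
  simpl in DD.
  replace dd with (-(a/2) * (exp (-((a/2)*t)) / w) * (sin (w * t) * Imp (Ec G) t - cos (w * t) * Imp (Es G) t) +
      exp (-((a/2)*t)) / w *
      (w * cos (w * t) * Imp (Ec G) t + sin (w * t) * Ec G t -
       (- w * sin (w * t) * Imp (Es G) t + cos (w * t) * Es G t))).
  exact DD.
  unfold dd, PS, Ec, Es. field. lra.
Qed.

Lemma PS_derive G B t : (forall s, continuous G s) -> (forall s, Rabs (G s) <= B) ->
  is_derive (PS G) t (-(a/2) * PS G t - w*w * TT G t + G t).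
Proof.
  intros HG HB.
  assert (Ha2 : 0 < a/2) by lra.
  pose proof (Imp_derive (Ec G) (a/2) B t Ha2 (fun s => Ec_cont G s HG) (fun s => Ec_bound G B s HB)) as D1.
  pose proof (Imp_derive (Es G) (a/2) B t Ha2 (fun s => Es_cont G s HG) (fun s => Es_bound G B s HB)) as D2.
  assert (DE : is_derive (fun t => exp (-((a/2)*t))) t (-(a/2) * exp (-((a/2)*t)))).
  { auto_derive; auto. ring. }
  assert (DS : is_derive (fun t => sin (w*t)) t (w * cos (w*t))).
  { auto_derive; auto. ring. }
  assert (DC : is_derive (fun t => cos (w*t)) t (- w * sin (w*t))).
  { auto_derive; auto. ring. }
  pose proof (dmul _ _ t _ _ DE (dplus _ _ t _ _ (dmul _ _ t _ _ DC D1) (dmul _ _ t _ _ DS D2))) as DD.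
  simpl in DD. unfold PS.
  match goal with |- is_derive _ _ ?d => set (dd := d) end.
  replace dd with (-(a/2) * exp (-((a/2)*t)) * (cos (w * t) * Imp (Ec G) t + sin (w * t) * Imp (Es G) t) +
      exp (-((a/2)*t)) *
      (- w * sin (w * t) * Imp (Ec G) t + cos (w * t) * Ec G t +
       (w * cos (w * t) * Imp (Es G) t + sin (w * t) * Es G t))).
  exact DD.
  unfold dd, TT, Ec, Es.
  pose proof (exp_cancel ((a/2)*t)) as EC. pose proof (sin2_cos2 (w*t)) as SC. unfold Rsqr in SC.
  match goal with |- ?L = ?R =>
    assert (EE : L - R = (exp (- (a / 2 * t)) * exp (a / 2 * t) * (sin (w*t) * sin (w*t) + cos (w*t) * cos (w*t)) - 1) * G t)
      by (field; lra) end.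
  rewrite EC, SC in EE. lra.
Qed.

End Kern.

Lemma lip_cont (H : R -> R) L x : 0 <= L -> (forall x y, Rabs (H x - H y) <= L * Rabs (x - y)) -> continuous H x.
Proof.
  intros HL HH. apply cont_of_eps. intros eps Heps.
  exists (eps / (L + 1)). split. apply Rdiv_lt_0_compat; lra.
  intros y Hy. eapply Rle_lt_trans. apply HH.
  apply Rle_lt_trans with (L * (eps/(L+1))). apply Rmult_le_compat_l; lra.
  apply Rmult_lt_reg_r with (L+1). lra.
  replace (L * (eps / (L + 1)) * (L + 1)) with (L*eps) by (field; lra). nra.
Qed.

Lemma geom_zero x C q : 0 <= q < 1 -> (forall n, x <= C * q ^ n) -> x <= 0.
Proof.
  intros Hq Hx.
  assert (L : is_lim_seq (fun n => C * q ^ n) 0).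
  { replace (Finite 0) with (Rbar_mult C 0) by (simpl; f_equal; ring).
    apply is_lim_seq_scal_l. apply is_lim_seq_geom. rewrite Rabs_right; lra. }
  pose proof (is_lim_seq_le (fun _ => x) _ x 0 Hx (is_lim_seq_const x) L). simpl in H. exact H.
Qed.

Section Fix.
Variables a w L K Gam : R.
Hypothesis Ha : 0 < a.
Hypothesis Hw : 0 < w.
Hypothesis HL : 0 <= L.
Hypothesis Hth : 4 * L / (a*a) < 1.
Variables H g : R -> R.
Hypothesis HH : forall x y, Rabs (H x - H y) <= L * Rabs (x - y).
Hypothesis HK : forall x, Rabs (H x) <= K.
Hypothesis Hg : forall s, continuous g s.
Hypothesis HG : forall s, Rabs (g s) <= Gam.

Definition th := 4 * L / (a*a).
Definition d0 := 4 * (K + Gam) / (a*a).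

Definition Gof (phi : R -> R) s := H (phi s) - g s.
Definition Step (phi : R -> R) := TT a w (Gof phi).

Lemma th_nonneg : 0 <= th.
Proof. unfold th. apply Rdiv_le_0_compat; nra. Qed.

Lemma Gof_cont phi s : (forall s, continuous phi s) -> continuous (Gof phi) s.
Proof.
  intros Hp. unfold Gof. apply cminus; auto.
  apply (continuous_comp phi H); auto. apply (lip_cont H L); auto.
Qed.

Lemma Gof_bound phi s : Rabs (Gof phi s) <= K + Gam.
Proof.
  unfold Gof. eapply Rle_trans. apply Rabs_triang_inv2 || apply Rabs_triang.
  rewrite Rabs_Ropp. pose proof (HK (phi s)). pose proof (HG s). lra.
Qed.

Lemma Step_cont phi t : (forall s, continuous phi s) -> continuous (Step phi) t.
Proof.
  intros Hp. apply (@ex_derive_continuous R_AbsRing R_NormedModule). eexists.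
  apply (TT_derive a w Ha Hw (Gof phi) (K + Gam)).
  intros; apply Gof_cont; auto. intros; apply Gof_bound.
Qed.

Lemma Step_bound phi t : (forall s, continuous phi s) -> Rabs (Step phi t) <= d0.
Proof.
  intros Hp. unfold Step, d0. apply (TT_bound a w Ha Hw (Gof phi) (K+Gam)).
  intros; apply Gof_cont; auto. intros; apply Gof_bound.
Qed.

Lemma Step_lip phi1 phi2 D t : (forall s, continuous phi1 s) -> (forall s, continuous phi2 s) ->
  (forall s, Rabs (phi1 s - phi2 s) <= D) -> Rabs (Step phi1 t - Step phi2 t) <= th * D.
Proof.
  intros H1 H2 HD. unfold Step.
  rewrite (TT_minus a w Ha (Gof phi1) (Gof phi2) (K+Gam) (K+Gam)).
  - replace (th * D) with (4 * (L*D) / (a*a)) by (unfold th; field; lra).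
    apply (TT_bound a w Ha Hw _ (L*D)).
    + intros; apply cminus; apply Gof_cont; auto.
    + intros s. unfold Gof. replace (H (phi1 s) - g s - (H (phi2 s) - g s)) with (H (phi1 s) - H (phi2 s)) by ring.
      eapply Rle_trans. apply HH. apply Rmult_le_compat_l; auto.
  - intros; apply Gof_cont; auto.
  - intros; apply Gof_bound.
  - intros; apply Gof_cont; auto.
  - intros; apply Gof_bound.
Qed.

Fixpoint phin (n : nat) : R -> R := match n with O => fun _ => 0 | S k => Step (phin k) end.

Lemma phin_cont n t : continuous (phin n) t.
Proof.
  revert t; induction n; intros t; simpl.
  - apply continuous_const.
  - apply Step_cont; auto.
Qed.

Lemma phin_step n t : Rabs (phin (S n) t - phin n t) <= d0 * th ^ n.
Proof.
  revert t; induction n; intros t.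
  - simpl. rewrite Rminus_0_r, Rmult_1_r. apply Step_bound. intros; apply continuous_const.
  - change (Rabs (Step (phin (S n)) t - Step (phin n) t) <= d0 * th ^ S n).
    replace (d0 * th ^ S n) with (th * (d0 * th ^ n)) by (simpl; ring).
    apply Step_lip; auto; intros; apply phin_cont.
Qed.

Lemma th_lt1 : th < 1.
Proof. exact Hth. Qed.

Lemma d0_nonneg : 0 <= d0.
Proof.
  pose proof (HK 0). pose proof (HG 0). pose proof (Rabs_pos (H 0)). pose proof (Rabs_pos (g 0)).
  unfold d0. apply Rdiv_le_0_compat; nra.
Qed.

Definition cc := d0 / (1 - th).

Lemma phin_cauchy n k t : Rabs (phin (n + k) t - phin n t) <= cc * th ^ n * (1 - th ^ k).
Proof.
  pose proof th_lt1. pose proof th_nonneg. pose proof d0_nonneg.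
  induction k.
  - rewrite Nat.add_0_r. rewrite Rminus_eq_0, Rabs_R0. simpl. lra.
  - replace (n + S k)%nat with (S (n + k)) by lia.
    eapply Rle_trans. 
    replace (phin (S (n + k)) t - phin n t) with ((phin (S (n + k)) t - phin (n+k) t) + (phin (n+k) t - phin n t)) by ring.
    apply Rabs_triang.
    pose proof (phin_step (n+k) t). rewrite pow_add in H3.
    unfold cc. 
    replace (d0 / (1 - th) * th ^ n * (1 - th ^ S k)) with
      (d0 * (th ^ n * th ^ k) + d0 / (1 - th) * th ^ n * (1 - th ^ k)) by (simpl; field; lra).
    unfold cc in IHk. lra.
Qed.

Lemma phin_cauchy' n m t : (n <= m)%nat -> Rabs (phin m t - phin n t) <= cc * th ^ n.
Proof.
  intros Hnm. replace m with (n + (m - n))%nat by lia.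
  eapply Rle_trans. apply phin_cauchy.
  pose proof th_lt1. pose proof th_nonneg. pose proof d0_nonneg.
  assert (0 <= cc) by (unfold cc; apply Rdiv_le_0_compat; lra).
  assert (0 <= th ^ n) by (apply pow_le; auto).
  assert (0 <= th ^ (m - n)) by (apply pow_le; auto).
  assert (0 <= cc * th ^ n) by nra. nra.
Qed.

Lemma geom_small eps : 0 < eps -> exists N, cc * th ^ N < eps.
Proof.
  intros He. pose proof th_lt1. pose proof th_nonneg. pose proof d0_nonneg.
  assert (0 <= cc) by (unfold cc; apply Rdiv_le_0_compat; lra).
  assert (Lg : is_lim_seq (fun n => th ^ n) 0) by (apply is_lim_seq_geom; rewrite Rabs_right; lra).
  apply is_lim_seq_spec in Lg.
  destruct (Lg (mkposreal (eps / (cc + 1)) ltac:(apply Rdiv_lt_0_compat; lra))) as [N HN].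
  exists N. specialize (HN N (Nat.le_refl N)). simpl in HN. rewrite Rminus_0_r in HN.
  rewrite Rabs_right in HN by (apply Rle_ge, pow_le; auto).
  apply Rle_lt_trans with ((cc + 1) * th ^ N). assert (0 <= th ^ N) by (apply pow_le; auto). nra.
  apply Rmult_lt_reg_r with (/ (cc+1)). apply Rinv_0_lt_compat; lra.
  replace ((cc + 1) * th ^ N * / (cc + 1)) with (th ^ N) by (field; lra). exact HN.
Qed.

Definition phiL t := real (Lim_seq (fun n => phin n t)).

Lemma phiL_lim t : is_lim_seq (fun n => phin n t) (phiL t).
Proof.
  assert (Hcv : ex_finite_lim_seq (fun n => phin n t)).
  { apply ex_lim_seq_cauchy_corr. intros eps.
    destruct (geom_small (eps/2)) as [N HN]. pose proof (cond_pos eps); lra.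
    exists N. intros n m Hn Hm.
    pose proof (phin_cauchy' N n t Hn). pose proof (phin_cauchy' N m t Hm).
    replace (phin n t - phin m t) with ((phin n t - phin N t) - (phin m t - phin N t)) by ring.
    eapply Rle_lt_trans. apply Rabs_triang. rewrite Rabs_Ropp. lra. }
  destruct Hcv as [l Hl]. unfold phiL. rewrite (is_lim_seq_unique _ _ Hl). simpl. exact Hl.
Qed.

Lemma phiL_close n t : Rabs (phiL t - phin n t) <= cc * th ^ n.
Proof.
  pose proof (is_lim_seq_abs _ _ (is_lim_seq_minus' _ _ _ _ (phiL_lim t) (is_lim_seq_const (phin n t)))) as L1.
  assert (Ev : eventually (fun m => Rabs (phin m t - phin n t) <= cc * th ^ n)).
  { exists n. intros m Hm. apply phin_cauchy'; auto. }
  pose proof (is_lim_seq_le_loc _ (fun _ => cc * th ^ n) _ _ Ev L1 (is_lim_seq_const _)) as Hle.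
  simpl in Hle. exact Hle.
Qed.

Lemma phiL_cont t : continuous phiL t.
Proof.
  apply cont_of_eps. intros eps He.
  destruct (geom_small (eps/3)) as [N HN]. lra.
  destruct (eps_of_cont (phin N) t (phin_cont N t) (eps/3)) as [d [Hd Hy]]. lra.
  exists d. split; auto. intros y Hyd.
  pose proof (phiL_close N y). pose proof (phiL_close N t). pose proof (Hy y Hyd).
  replace (phiL y - phiL t) with ((phiL y - phin N y) + (phin N y - phin N t) - (phiL t - phin N t)) by ring.
  eapply Rle_lt_trans. apply Rabs_triang_inv2 || apply Rabs_triang. 
  rewrite Rabs_Ropp. eapply Rle_lt_trans. apply Rplus_le_compat_r. apply Rabs_triang. lra.
Qed.

Lemma phiL_fix t : Step phiL t = phiL t.
Proof.
  pose proof th_lt1. pose proof th_nonneg.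
  assert (forall n, Rabs (Step phiL t - phiL t) <= (2 * cc) * th ^ n).
  { intros n.
    pose proof (Step_lip phiL (phin n) (cc * th ^ n) t phiL_cont (phin_cont n) (fun s => phiL_close n s)).
    pose proof (phiL_close (S n) t) as HS.
    change (phin (S n) t) with (Step (phin n) t) in HS.
    replace (Step phiL t - phiL t) with ((Step phiL t - Step (phin n) t) - (phiL t - Step (phin n) t)) by ring.
    eapply Rle_trans. apply Rabs_triang. rewrite Rabs_Ropp.
    assert (th * (cc * th ^ n) <= cc * th ^ n).
    { assert (0 <= cc * th ^ n). pose proof d0_nonneg. 
      apply Rmult_le_pos. unfold cc; apply Rdiv_le_0_compat; lra. apply pow_le; auto. nra. }
    simpl in HS. assert (cc * (th * th ^ n) <= cc * th ^ n).
    { assert (0 <= cc) by (pose proof d0_nonneg; unfold cc; apply Rdiv_le_0_compat; lra).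
      assert (0 <= th ^ n) by (apply pow_le; auto). nra. }
    lra. }
  assert (Rabs (Step phiL t - phiL t) <= 0) by (apply (geom_zero _ (2*cc) th); auto).
  pose proof (Rabs_pos (Step phiL t - phiL t)).
  assert (Rabs (Step phiL t - phiL t) = 0) by lra.
  apply Rabs_eq_0 in H5. lra.
Qed.

End Fix.

Lemma is_derive_Rpower x e : 0 < x -> is_derive (fun y => Rpower y e) x (e * Rpower x (e-1)).
Proof. intros Hx. apply is_derive_Reals. apply derivable_pt_lim_power; auto. Qed.

Lemma Rpower_m1 r e : 0 < r -> Rpower r (e - 1) = Rpower r e / r.
Proof.
  intros Hr. unfold Rminus. rewrite Rpower_plus, Rpower_Ropp, Rpower_1 by auto. reflexivity.
Qed.

Lemma Rpower_pos x e : 0 < Rpower x e.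
Proof. unfold Rpower; apply exp_pos. Qed.

Definition clamp (rho x : R) := Rmax (- rho) (Rmin rho x).

Lemma clamp_bound rho x : 0 <= rho -> Rabs (clamp rho x) <= rho.
Proof.
  intros H. unfold clamp, Rmax, Rmin. apply Rabs_le.
  repeat destruct Rle_dec; lra.
Qed.
Lemma clamp_lip rho x y : 0 <= rho -> Rabs (clamp rho x - clamp rho y) <= Rabs (x - y).
Proof.
  intros H. unfold clamp, Rmax, Rmin.
  repeat destruct Rle_dec; unfold Rabs; repeat destruct Rcase_abs; lra.
Qed.
Lemma clamp_id rho x : Rabs x <= rho -> clamp rho x = x.
Proof.
  intros H. apply Rabs_le_between in H. unfold clamp, Rmax, Rmin.
  repeat destruct Rle_dec; lra.
Qed.

Section Main.
Variables (N : nat) (alpha p : R).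
Hypothesis HN : (3 <= N)%nat.
Hypothesis Hal : -2 < alpha.
Hypothesis Hp : (INR N + 2 + 2 * alpha) / (INR N - 2) < p.

Definition n2 := INR N - 2.
Definition mm := (2 + alpha) / (p - 1).
Definition aa := n2 - 2 * mm.
Definition bb := mm * (n2 - mm).
Definition AA := Rpower bb (1 / (p - 1)).
Definition lam := (p - 1) * bb.
Definition ww := sqrt (Rmax (lam - aa*aa/4) (lam/4)).
Definition beta := aa*aa/4 + ww*ww.

Lemma n2_ge1 : 1 <= n2.
Proof. unfold n2. apply le_INR in HN. simpl in HN. lra. Qed.

Lemma p_gt1 : 1 < p.
Proof.
  pose proof n2_ge1. unfold n2 in H.
  assert (Hq : INR N + 2 + 2 * alpha < p * (INR N - 2)).
  { apply Rmult_lt_compat_r with (r := INR N - 2) in Hp; [|lra].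
    replace ((INR N + 2 + 2 * alpha) / (INR N - 2) * (INR N - 2)) with (INR N + 2 + 2 * alpha) in Hp
      by (field; lra). lra. }
  nra.
Qed.

Lemma mm_pos : 0 < mm.
Proof. pose proof p_gt1. unfold mm. apply Rdiv_lt_0_compat; lra. Qed.

Lemma mm_small : 2 * mm < n2.
Proof.
  pose proof n2_ge1. pose proof p_gt1. unfold n2 in *. unfold mm.
  assert (Hq : INR N + 2 + 2 * alpha < p * (INR N - 2)).
  { apply Rmult_lt_compat_r with (r := INR N - 2) in Hp; [|lra].
    replace ((INR N + 2 + 2 * alpha) / (INR N - 2) * (INR N - 2)) with (INR N + 2 + 2 * alpha) in Hp
      by (field; lra). lra. }
  apply Rmult_lt_reg_r with (p - 1). lra.
  replace (2 * ((2 + alpha) / (p - 1)) * (p - 1)) with (2 * (2 + alpha)) by (field; lra). nra.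
Qed.

Lemma aa_pos : 0 < aa.
Proof. pose proof mm_small. unfold aa. lra. Qed.
Lemma bb_pos : 0 < bb.
Proof. pose proof mm_small. pose proof mm_pos. unfold bb. apply Rmult_lt_0_compat; lra. Qed.
Lemma AA_pos : 0 < AA.
Proof. apply Rpower_pos. Qed.
Lemma lam_pos : 0 < lam.
Proof. pose proof bb_pos; pose proof p_gt1. unfold lam. apply Rmult_lt_0_compat; lra. Qed.

Lemma AA_pm1 : Rpower AA (p - 1) = bb.
Proof.
  pose proof p_gt1. unfold AA. rewrite Rpower_mult.
  replace (1 / (p - 1) * (p - 1)) with 1 by (field; lra). apply Rpower_1, bb_pos.
Qed.
Lemma AA_p : Rpower AA p = bb * AA.
Proof.
  replace p with ((p - 1) + 1) at 1 by ring. rewrite Rpower_plus, AA_pm1, Rpower_1; auto. apply AA_pos.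
Qed.

Lemma ww_sq : ww * ww = Rmax (lam - aa*aa/4) (lam/4).
Proof.
  unfold ww. apply sqrt_sqrt. pose proof lam_pos. unfold Rmax; destruct Rle_dec; lra.
Qed.
Lemma ww_pos : 0 < ww.
Proof.
  unfold ww. apply sqrt_lt_R0. pose proof lam_pos. unfold Rmax; destruct Rle_dec; lra.
Qed.

Definition th0 := Rabs (beta - lam) * 4 / (aa*aa).
Lemma th0_lt1 : th0 < 1.
Proof.
  pose proof aa_pos. pose proof lam_pos. unfold th0, beta. rewrite ww_sq.
  assert (0 < aa*aa) by nra.
  apply Rmult_lt_reg_r with (aa*aa); auto.
  replace (Rabs (aa * aa / 4 + Rmax (lam - aa * aa / 4) (lam / 4) - lam) * 4 / (aa * aa) * (aa * aa))
    with (Rabs (aa * aa / 4 + Rmax (lam - aa * aa / 4) (lam / 4) - lam) * 4) by (field; lra).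
  unfold Rmax; destruct Rle_dec; unfold Rabs; destruct Rcase_abs; lra.
Qed.
Lemma th0_nonneg : 0 <= th0.
Proof. pose proof aa_pos. unfold th0. apply Rdiv_le_0_compat. pose proof (Rabs_pos (beta - lam)); lra. nra. Qed.

Definition eps0 := (1 - th0) * (aa*aa) / 8.
Definition LL := Rabs (beta - lam) + eps0.
Lemma eps0_pos : 0 < eps0.
Proof. pose proof th0_lt1. pose proof aa_pos. unfold eps0. apply Rdiv_lt_0_compat; [|lra]. apply Rmult_lt_0_compat; nra. Qed.
Lemma LL_nonneg : 0 <= LL.
Proof. pose proof eps0_pos. pose proof (Rabs_pos (beta - lam)). unfold LL; lra. Qed.
Lemma th_LL : 4 * LL / (aa*aa) = (1 + th0) / 2.
Proof. pose proof aa_pos. unfold LL, eps0, th0. field. lra. Qed.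

Lemma rho_exists : exists rho, 0 < rho /\ rho <= AA / 2 /\
  forall x, Rabs x <= rho -> Rabs (p * Rpower (AA + x) (p-1) - p * bb) <= eps0.
Proof.
  pose proof p_gt1. pose proof AA_pos. pose proof eps0_pos.
  assert (Hc : continuous (fun x => Rpower (AA + x) (p-1)) 0).
  { apply (@ex_derive_continuous R_AbsRing R_NormedModule). eexists.
    apply (is_derive_comp (fun y => Rpower y (p-1)) (fun x => AA + x)).
    apply is_derive_Rpower. lra. auto_derive; auto. }
  destruct (eps_of_cont _ 0 Hc (eps0 / p)) as [d [Hd Hy]]. apply Rdiv_lt_0_compat; lra.
  exists (Rmin (d/2) (AA/2)). split; [|split].
  - unfold Rmin; destruct Rle_dec; lra.
  - apply Rmin_r.
  - intros x Hx. assert (Hxd : Rabs (x - 0) < d).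
    { rewrite Rminus_0_r. pose proof (Rmin_l (d/2) (AA/2)). lra. }
    specialize (Hy x Hxd). rewrite Rplus_0_r, AA_pm1 in Hy.
    replace (p * Rpower (AA + x) (p - 1) - p * bb) with (p * (Rpower (AA + x) (p - 1) - bb)) by ring.
    rewrite Rabs_mult, (Rabs_right p) by lra.
    apply Rmult_lt_compat_l with (r := p) in Hy; [|lra].
    replace (p * (eps0 / p)) with eps0 in Hy by (field; lra). lra.
Qed.


Definition H0 x := beta * x - (Rpower (AA + x) p - bb * (AA + x)).
Definition dH0 x := beta - (p * Rpower (AA + x) (p-1) - bb).

Lemma H0_derive x : 0 < AA + x -> is_derive H0 x (dH0 x).
Proof.
  intros Hx. unfold H0, dH0.
  apply (dminus (fun x => beta * x) (fun x => Rpower (AA + x) p - bb * (AA + x))).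
  - auto_derive; auto. ring.
  - apply (dminus (fun x => Rpower (AA + x) p) (fun x => bb * (AA + x))).
    + replace (p * Rpower (AA + x) (p - 1)) with (scal 1 (p * Rpower (AA + x) (p - 1))) by (unfold scal; simpl; unfold mult; simpl; ring).
      apply (is_derive_comp (fun y => Rpower y p) (fun x => AA + x)).
      apply is_derive_Rpower; auto. auto_derive; auto.
    + auto_derive; auto. ring.
Qed.

Lemma H0_zero : H0 0 = 0.
Proof. unfold H0. rewrite Rplus_0_r, AA_p. ring. Qed.

Variable rho : R.
Hypothesis Hrho : 0 < rho.
Hypothesis HrhoA : rho <= AA / 2.
Hypothesis Hrhoe : forall x, Rabs x <= rho -> Rabs (p * Rpower (AA + x) (p-1) - p * bb) <= eps0.

Lemma dH0_bound x : Rabs x <= rho -> Rabs (dH0 x) <= LL.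
Proof.
  intros Hx. specialize (Hrhoe x Hx). unfold dH0, LL, lam in *.
  replace (beta - (p * Rpower (AA + x) (p - 1) - bb)) with
    ((beta - (p - 1) * bb) - (p * Rpower (AA + x) (p - 1) - p * bb)) by ring.
  eapply Rle_trans. apply Rabs_triang. rewrite Rabs_Ropp. lra.
Qed.

Lemma H0_lip x y : Rabs x <= rho -> Rabs y <= rho -> Rabs (H0 x - H0 y) <= LL * Rabs (x - y).
Proof.
  intros Hx Hy. pose proof AA_pos.
  apply Rabs_le_between in Hx. apply Rabs_le_between in Hy.
  destruct (MVT_gen H0 y x dH0) as [c [Hc E]].
  - intros z Hz. apply H0_derive.
    assert (Rmin y x <= z <= Rmax y x) by lra.
    unfold Rmin, Rmax in H1; destruct Rle_dec; lra.
  - intros z Hz. apply continuity_pt_filterlim. apply (@ex_derive_continuous R_AbsRing R_NormedModule).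
    eexists. apply H0_derive. unfold Rmin, Rmax in Hz; destruct Rle_dec; lra.
  - rewrite E, Rabs_mult. apply Rmult_le_compat_r. apply Rabs_pos.
    apply dH0_bound. apply Rabs_le. unfold Rmin, Rmax in Hc; destruct Rle_dec; lra.
Qed.

Definition Hf x := H0 (clamp rho x).

Lemma Hf_lip x y : Rabs (Hf x - Hf y) <= LL * Rabs (x - y).
Proof.
  unfold Hf. eapply Rle_trans. apply H0_lip; apply clamp_bound; lra.
  apply Rmult_le_compat_l. apply LL_nonneg. apply clamp_lip; lra.
Qed.

Lemma Hf_bound x : Rabs (Hf x) <= LL * rho.
Proof.
  unfold Hf. rewrite <- (Rminus_0_r (H0 (clamp rho x))), <- H0_zero.
  eapply Rle_trans. apply H0_lip. apply clamp_bound; lra. rewrite Rabs_R0; lra.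
  apply Rmult_le_compat_l. apply LL_nonneg. rewrite Rminus_0_r. apply clamp_bound; lra.
Qed.

End Main.

Lemma exp_Rpower r t : exp t = r -> exp (r * t) = exp (r * t).
Proof. auto. Qed.

Lemma f_bound (f : R -> R) (m : R) N : 0 < m -> m + 2 < INR N -> admissible_f f -> F0 f -> Finf N f ->
  exists G0, 0 < G0 /\ forall t, Rabs (exp ((m+2)*t) * f (exp t)) <= G0.
Proof.
  intros Hm HmN [Hcont [Hnn _]] [nu [Hnu [C [delta [Hdel HC]]]]] [q [Hq [C' [R0 HC']]]].
  set (R1 := Rmax R0 1).
  assert (HR1 : 1 <= R1) by apply Rmax_r.
  assert (HR0 : R0 <= R1) by apply Rmax_l.
  assert (HMf : exists Mf, 0 <= Mf /\ forall r, delta <= r <= R1 -> Rabs (f r) <= Mf).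
  { destruct (Rle_dec delta R1) as [Hd|Hd].
    - destruct (continuity_ab_maj (fun r => Rabs (f r)) delta R1 Hd) as [Mx [HMx _]].
      + intros c Hc. apply continuity_pt_filterlim. apply continuous_Rabs_comp. apply Hcont. lra.
      + exists (Rabs (f Mx)). split. apply Rabs_pos. intros r Hr. apply HMx; auto.
    - exists 0. split. lra. intros r Hr. lra. }
  destruct HMf as [Mf [HMf0 HMf]].
  exists (Rabs C * Rpower delta (m+2+nu) + Rabs C' + Rpower R1 (m+2) * Mf + 1).
  assert (P1 : 0 <= Rabs C * Rpower delta (m+2+nu)) by (apply Rmult_le_pos; [apply Rabs_pos|left; apply Rpower_pos]).
  assert (P2 : 0 <= Rpower R1 (m+2) * Mf) by (apply Rmult_le_pos; auto; left; apply Rpower_pos).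
  pose proof (Rabs_pos C'). split. lra.
  intros t. set (r := exp t). assert (Hr : 0 < r) by apply exp_pos.
  assert (E : exp ((m+2)*t) = Rpower r (m+2)) by (unfold Rpower, r; rewrite ln_exp; reflexivity).
  rewrite E, Rabs_mult, (Rabs_right (Rpower r (m+2))) by (left; apply Rpower_pos).
  destruct (Rlt_dec r delta) as [H1|H1].
  - assert (Rabs (f r) <= Rabs C * Rpower r nu).
    { eapply Rle_trans. apply HC; lra. apply Rmult_le_compat_r. left; apply Rpower_pos. apply Rle_abs. }
    apply Rle_trans with (Rabs C * Rpower r (m+2+nu)).
    + rewrite (Rpower_plus (m+2) nu r).
      replace (Rabs C * (Rpower r (m + 2) * Rpower r nu)) with (Rpower r (m + 2) * (Rabs C * Rpower r nu)) by ring.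
      apply Rmult_le_compat_l. left; apply Rpower_pos. auto.
    + assert (Rpower r (m+2+nu) <= Rpower delta (m+2+nu)) by (apply Rle_Rpower_l; lra).
      pose proof (Rabs_pos C). nra.
  - destruct (Rlt_dec R1 r) as [H2|H2].
    + assert (Rabs (f r) <= Rabs C' * Rpower r (-q)).
      { eapply Rle_trans. apply HC'; lra. apply Rmult_le_compat_r. left; apply Rpower_pos. apply Rle_abs. }
      apply Rle_trans with (Rabs C' * Rpower r (m+2-q)).
      * unfold Rminus. rewrite (Rpower_plus (m+2) (-q) r).
        replace (Rabs C' * (Rpower r (m + 2) * Rpower r (-q))) with (Rpower r (m + 2) * (Rabs C' * Rpower r (-q))) by ring.
        apply Rmult_le_compat_l. left; apply Rpower_pos. auto.
      * assert (HH5 : Rpower r (m+2-q) <= Rpower r 0) by (apply Rle_Rpower; lra).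
        rewrite Rpower_O in HH5 by lra. nra.
    + assert (Rabs (f r) <= Mf) by (apply HMf; lra).
      assert (Rpower r (m+2) <= Rpower R1 (m+2)) by (apply Rle_Rpower_l; lra).
      pose proof (Rpower_pos r (m+2)). pose proof (Rabs_pos (f r)). nra.
Qed.

Lemma ode_id (a w bb A phi PSv Wp gv : R) :
  -(a/2)*(-(a/2)*phi + PSv) + (-(a/2)*PSv - w*w*phi + ((a*a/4 + w*w)*phi - (Wp - bb*(A+phi)) - gv))
  + a*(-(a/2)*phi + PSv) - bb*(A+phi) + Wp + gv = 0.
Proof. field. Qed.

Lemma is_derive_eq (f : R -> R) x d d' : is_derive f x d -> d = d' -> is_derive f x d'.
Proof. intros H E; subst; auto. Qed.

Lemma construct (N : nat) (alpha p : R) (f : R -> R) (mu rho G0 : R) :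
  (3 <= N)%nat -> -2 < alpha -> (INR N + 2 + 2 * alpha) / (INR N - 2) < p ->
  0 < rho -> rho <= AA N alpha p / 2 ->
  (forall x, Rabs x <= rho -> Rabs (p * Rpower (AA N alpha p + x) (p-1) - p * bb N alpha p) <= eps0 N alpha p) ->
  (forall r, 0 < r -> continuous f r) -> 0 <= mu ->
  (forall t, Rabs (exp ((mm alpha p + 2) * t) * f (exp t)) <= G0) ->
  4 * (LL N alpha p * rho + mu * G0) / (aa N alpha p * aa N alpha p) <= rho ->
  exists u, singular_solution N alpha p mu f u /\ slow_decay N u.
Proof.
  intros HN Hal Hp Hrho HrhoA Hrhoe Hfc Hmu HG0 Hsmall.
  pose proof (aa_pos N alpha p HN Hal Hp) as Ha.
  pose proof (ww_pos N alpha p HN Hal Hp) as Hw.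
  pose proof (LL_nonneg N alpha p HN Hal Hp) as HL.
  pose proof (th0_lt1 N alpha p HN Hal Hp) as Hth0.
  pose proof (th_LL N alpha p HN Hal Hp) as HthL.
  assert (Hth : 4 * LL N alpha p / (aa N alpha p * aa N alpha p) < 1) by lra.
  pose proof (Hf_lip N alpha p HN Hal Hp rho Hrho HrhoA Hrhoe) as HH.
  pose proof (Hf_bound N alpha p HN Hal Hp rho Hrho HrhoA Hrhoe) as HK.
  set (m := mm alpha p) in *.
  set (g := fun t => mu * (exp ((m + 2) * t) * f (exp t))).
  assert (Hg : forall s, continuous g s).
  { intros s. unfold g. apply cmul. apply continuous_const. apply cmul.
    apply continuous_exp_comp, cont_lin. apply (continuous_comp exp f). apply continuous_exp. apply Hfc, exp_pos. }
  assert (HG : forall s, Rabs (g s) <= mu * G0).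
  { intros s. unfold g. rewrite Rabs_mult, (Rabs_right mu) by lra. apply Rmult_le_compat_l; auto. }
  set (a := aa N alpha p) in *. set (w := ww N alpha p) in *. set (L := LL N alpha p) in *.
  set (H := Hf N alpha p rho) in *.
  set (phi := phiL a w H g).
  pose proof (phiL_fix a w L (L * rho) (mu * G0) Ha Hw HL Hth H g HH HK Hg HG) as Hfix.
  pose proof (phiL_cont a w L (L * rho) (mu * G0) Ha Hw HL Hth H g HH HK Hg HG) as Hpc.
  fold phi in Hfix, Hpc.
  assert (Hpb : forall t, Rabs (phi t) <= rho).
  { intros t. rewrite <- Hfix. eapply Rle_trans.
    apply (Step_bound a w L (L * rho) (mu * G0) Ha Hw HL H g HH HK Hg HG); auto.
    unfold d0. exact Hsmall. }
  set (Gf := Gof H g phi).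
  assert (HGc : forall s, continuous Gf s) by (intros; apply (Gof_cont L HL H g HH Hg); auto).
  assert (HGb : forall s, Rabs (Gf s) <= L * rho + mu * G0) by (intros; apply Gof_bound; auto).
  assert (HTT : forall t, TT a w Gf t = phi t) by (intros; apply Hfix).
  set (W := fun t => AA N alpha p + phi t).
  set (W1 := fun t => -(a/2) * phi t + PS a w Gf t).
  set (W2 := fun t => -(a/2) * W1 t + (-(a/2) * PS a w Gf t - w*w * phi t + Gf t)).
  assert (DW : forall t, is_derive W t (W1 t)).
  { intros t. unfold W, W1. apply (is_derive_ext (fun t => AA N alpha p + TT a w Gf t)).
    { intros; rewrite HTT; auto. }
    replace (-(a/2) * phi t + PS a w Gf t) with (0 + (-(a/2) * TT a w Gf t + PS a w Gf t)) by (rewrite HTT; ring).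
    apply (dplus (fun _ => AA N alpha p)). apply (is_derive_const (K:=R_AbsRing) (V:=R_NormedModule)).
    apply (TT_derive a w Ha Hw Gf (L * rho + mu * G0)); auto. }
  assert (DW1 : forall t, is_derive W1 t (W2 t)).
  { intros t. unfold W2, W1.
    apply (is_derive_ext (fun t => -(a/2) * TT a w Gf t + PS a w Gf t)).
    { intros; rewrite HTT; auto. }
    replace (-(a/2) * (-(a/2) * phi t + PS a w Gf t) + (-(a/2) * PS a w Gf t - w*w * phi t + Gf t))
      with (-(a/2) * (-(a/2) * TT a w Gf t + PS a w Gf t) + (-(a/2) * PS a w Gf t - w*w * TT a w Gf t + Gf t))
      by (rewrite HTT; ring).
    apply dplus. apply is_derive_scal. apply (TT_derive a w Ha Hw Gf (L * rho + mu * G0)); auto.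
    apply (PS_derive a w Ha Hw Gf (L * rho + mu * G0)); auto. }
  assert (HAA := AA_pos N alpha p).
  assert (HWpos : forall t, AA N alpha p / 2 <= W t).
  { intros t. unfold W. pose proof (Hpb t) as Hq. apply Rabs_le_between in Hq. lra. }
  assert (Hid : forall t, W2 t + a * W1 t - bb N alpha p * W t + Rpower (W t) p + g t = 0).
  { intros t.
    assert (EG : Gf t = beta N alpha p * phi t - (Rpower (AA N alpha p + phi t) p - bb N alpha p * (AA N alpha p + phi t)) - g t).
    { unfold Gf, Gof, H, Hf. rewrite clamp_id by auto. reflexivity. }
    unfold W2, W1, W. rewrite EG. unfold beta, a, w. apply ode_id. }
  assert (Hm : 0 < m) by (apply (mm_pos N alpha p HN Hal Hp)).
  assert (Hm2 : 2 * m < n2 N) by (apply (mm_small N alpha p HN Hal Hp)).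
  assert (Hp1 : 1 < p) by (apply (p_gt1 N alpha p HN Hal Hp)).
  assert (HWc : forall t, continuous W t).
  { intros t. apply (@ex_derive_continuous R_AbsRing R_NormedModule). eexists; apply DW. }
  assert (HW1c : forall t, continuous W1 t).
  { intros t. apply (@ex_derive_continuous R_AbsRing R_NormedModule). eexists; apply DW1. }
  assert (HPSc : forall t, continuous (PS a w Gf) t).
  { intros t. apply (@ex_derive_continuous R_AbsRing R_NormedModule). eexists.
    apply (PS_derive a w Ha Hw Gf (L * rho + mu * G0)); auto. }
  set (V := fun t => W2 t - (2*m+1) * W1 t + m*(m+1) * W t).
  assert (HVc : forall t, continuous V t).
  { intros t. unfold V, W2. apply cplus. apply cminus. apply cplus.
    apply cmul. apply continuous_const. auto.
    apply cplus. apply cminus. apply cmul. apply continuous_const. auto.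
    apply cmul. apply continuous_const. auto. auto.
    apply cmul. apply continuous_const. auto.
    apply cmul. apply continuous_const. auto. }
  set (u := fun r => Rpower r (-m) * W (ln r)).
  set (u1 := fun r => Rpower r (-m - 1) * (W1 (ln r) - m * W (ln r))).
  set (u2 := fun r => Rpower r (-m - 1 - 1) * V (ln r)).
  assert (Hupos : forall r, 0 < r -> Rpower r (-m) * (AA N alpha p / 2) <= u r).
  { intros r Hr. unfold u. apply Rmult_le_compat_l. left; apply Rpower_pos. auto. }
  exists u. split.
  - exists u1, u2. split.
    + intros r Hr. split; [|split; [|split; [|split]]].
      * eapply is_derive_eq.
        apply (dmul (fun r => Rpower r (-m)) (fun r => W (ln r)) r _ _ (is_derive_Rpower r (-m) Hr)
                 (is_derive_comp W ln r _ _ (DW (ln r)) (is_derive_ln r Hr))).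
        unfold u1. rewrite (Rpower_m1 r (-m)) by auto. unfold scal; simpl; unfold mult; simpl. field. lra.
      * eapply is_derive_eq.
        apply (dmul (fun r => Rpower r (-m - 1)) (fun r => W1 (ln r) - m * W (ln r)) r _ _ (is_derive_Rpower r (-m - 1) Hr)
                 (dminus _ _ r _ _ (is_derive_comp W1 ln r _ _ (DW1 (ln r)) (is_derive_ln r Hr))
                    (is_derive_scal _ r m _ (is_derive_comp W ln r _ _ (DW (ln r)) (is_derive_ln r Hr))))).
        unfold u2, V. rewrite (Rpower_m1 r (-m - 1)) by auto. unfold scal; simpl; unfold mult; simpl. field. lra.
      * unfold u2. apply cmul.
        apply (@ex_derive_continuous R_AbsRing R_NormedModule). eexists; apply is_derive_Rpower; auto.
        apply (continuous_comp ln V). apply (@ex_derive_continuous R_AbsRing R_NormedModule). eexists; apply is_derive_ln; auto.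
        auto.
      * eapply Rlt_le_trans; [|apply Hupos; auto]. apply Rmult_lt_0_compat. apply Rpower_pos. lra.
      * set (X := Rpower r (-m - 1 - 1)).
        assert (EY : Rpower r (-m - 1) = X * r).
        { unfold X. rewrite (Rpower_m1 r (-m - 1)) by auto. field. lra. }
        assert (EZ : Rpower r (-m) = X * r * r).
        { rewrite <- EY. rewrite (Rpower_m1 r (-m)) by auto. field. lra. }
        assert (Ep : Rpower r alpha * Rpower (u r) p = X * Rpower (W (ln r)) p).
        { unfold u. rewrite <- Rpower_mult_distr. rewrite Rpower_mult. rewrite <- Rmult_assoc, <- Rpower_plus.
          unfold X. f_equal. f_equal. unfold m, mm. field. lra.
          apply Rpower_pos. pose proof (HWpos (ln r)); lra. }
        assert (Ef : mu * f r = X * g (ln r)).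
        { unfold g. rewrite exp_ln by auto.
          replace (exp ((m + 2) * ln r)) with (Rpower r (m + 2)) by reflexivity.
          replace (X * (mu * (Rpower r (m + 2) * f r))) with (mu * f r * (X * Rpower r (m + 2))) by ring.
          unfold X. rewrite <- Rpower_plus. replace (-m - 1 - 1 + (m + 2)) with 0 by ring.
          rewrite Rpower_O by auto. ring. }
        fold X. unfold u1, u2. fold X. rewrite EY. rewrite Ep, Ef.
        transitivity (X * (W2 (ln r) + a * W1 (ln r) - bb N alpha p * W (ln r) + Rpower (W (ln r)) p + g (ln r))).
        { unfold V, a, aa, bb, n2, m. field. lra. }
        rewrite Hid. ring.
    + intros P [M HM].
      set (M' := Rmax M 1).
      assert (HM' : 1 <= M') by apply Rmax_r.
      assert (HA2 : 0 < AA N alpha p / (2 * M')) by (apply Rdiv_lt_0_compat; lra).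
      set (del := Rpower (AA N alpha p / (2 * M')) (1 / m)).
      assert (Hdel : 0 < del) by apply Rpower_pos.
      exists (mkposreal del Hdel). intros y Hy Hy0. apply HM.
      assert (Hyd : y < del).
      { unfold ball in Hy; simpl in Hy; unfold AbsRing_ball, abs, minus, plus, opp in Hy; simpl in Hy.
        rewrite Ropp_0, Rplus_0_r, Rabs_right in Hy by lra. exact Hy. }
      assert (Hym : Rpower y m < AA N alpha p / (2 * M')).
      { replace (AA N alpha p / (2 * M')) with (Rpower del m).
        apply Rlt_Rpower_l; auto. unfold del. rewrite Rpower_mult. replace (1 / m * m) with 1 by (field; lra).
        apply Rpower_1; auto. }
      pose proof (Hupos y Hy0). rewrite Rpower_Ropp in H1.
      assert (HMM : M' < / Rpower y m * (AA N alpha p / 2)).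
      { pose proof (Rpower_pos y m).
        apply Rmult_lt_reg_r with (Rpower y m); auto.
        replace (/ Rpower y m * (AA N alpha p / 2) * Rpower y m) with (AA N alpha p / 2) by (field; lra).
        apply Rmult_lt_compat_l with (r := 2 * M') in Hym; [|lra].
        replace (2 * M' * (AA N alpha p / (2 * M'))) with (AA N alpha p) in Hym by (field; lra). lra. }
      pose proof (Rmax_l M 1). fold M' in H2. lra.
  - intros M R0.
    set (M' := Rmax M 1). assert (HM' : 1 <= M') by apply Rmax_r.
    set (k := n2 N - m). assert (Hk : 0 < k) by (unfold k; lra).
    set (r := Rmax (R0 + 1) (Rmax 1 (Rpower (2 * M' / AA N alpha p) (1 / k))) + 1).
    assert (Hr1 : R0 + 1 <= r - 1) by (unfold r; rewrite Rplus_minus_r_ex || idtac; pose proof (Rmax_l (R0 + 1) (Rmax 1 (Rpower (2 * M' / AA N alpha p) (1 / k)))); lra).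
    assert (Hr2 : Rmax 1 (Rpower (2 * M' / AA N alpha p) (1 / k)) <= r - 1) by
      (unfold r; pose proof (Rmax_r (R0 + 1) (Rmax 1 (Rpower (2 * M' / AA N alpha p) (1 / k)))); lra).
    assert (Hr3 : 1 <= r - 1) by (pose proof (Rmax_l 1 (Rpower (2 * M' / AA N alpha p) (1 / k))); lra).
    assert (Hr4 : Rpower (2 * M' / AA N alpha p) (1 / k) < r) by (pose proof (Rmax_r 1 (Rpower (2 * M' / AA N alpha p) (1 / k))); lra).
    exists r. split; [lra|split; [lra|]].
    assert (Hr : 0 < r) by lra.
    rewrite <- Rpower_pow by auto. rewrite minus_INR by lia. simpl (INR 2).
    apply Rlt_le_trans with (Rpower r (INR N - 2) * (Rpower r (-m) * (AA N alpha p / 2))).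
    2:{ apply Rmult_le_compat_l. left; apply Rpower_pos. apply Hupos; auto. }
    rewrite <- Rmult_assoc, <- Rpower_plus.
    replace (INR N - 2 + - m) with k by (unfold k, n2; ring).
    assert (Hkk : 2 * M' / AA N alpha p < Rpower r k).
    { replace (2 * M' / AA N alpha p) with (Rpower (Rpower (2 * M' / AA N alpha p) (1 / k)) k).
      apply Rlt_Rpower_l; auto. split; auto. apply Rpower_pos.
      rewrite Rpower_mult. replace (1 / k * k) with 1 by (field; lra). apply Rpower_1.
      apply Rdiv_lt_0_compat; lra. }
    pose proof (Rmax_l M 1). fold M' in H1.
    apply Rmult_lt_compat_r with (r := AA N alpha p / 2) in Hkk; [|lra].
    replace (2 * M' / AA N alpha p * (AA N alpha p / 2)) with M' in Hkk by (field; lra). lra.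
Qed.

Theorem corollary1p7 (N : nat) (alpha p : R) (f : R -> R) :
  (3 <= N)%nat -> -2 < alpha -> pS N alpha < p ->
  admissible_f f -> F0 f -> Finf N f ->
  exists mu1, 0 < mu1 /\
    forall mu, 0 <= mu < mu1 ->
      exists u : R -> R, singular_solution N alpha p mu f u /\ slow_decay N u.
Proof.
  intros HN Hal Hp Hadm HF0 HFinf.
  unfold pS in Hp.
  destruct (rho_exists N alpha p HN Hal Hp) as [rho [Hrho [HrhoA Hrhoe]]].
  pose proof (mm_pos N alpha p HN Hal Hp) as Hm.
  pose proof (mm_small N alpha p HN Hal Hp) as Hm2.
  assert (HmN : mm alpha p + 2 < INR N) by (unfold n2 in Hm2; lra).
  destruct (f_bound f (mm alpha p) N Hm HmN Hadm HF0 HFinf) as [G0 [HG0 HG0b]].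
  pose proof (aa_pos N alpha p HN Hal Hp) as Ha.
  pose proof (th0_lt1 N alpha p HN Hal Hp) as Hth0.
  pose proof (th_LL N alpha p HN Hal Hp) as HthL.
  set (a := aa N alpha p) in *. set (L := LL N alpha p) in *.
  assert (Haa : 0 < a * a) by nra.
  exists ((rho - 4 * L / (a*a) * rho) * (a*a) / (4 * G0)).
  split.
  - apply Rdiv_lt_0_compat; [|lra]. apply Rmult_lt_0_compat; auto. nra.
  - intros mu [Hmu0 Hmu1].
    destruct Hadm as [Hfc Hadm'].
    apply (construct N alpha p f mu rho G0); auto.
    fold a L.
    assert (mu * G0 <= (rho - 4 * L / (a*a) * rho) * (a*a) / 4).
    { apply Rmult_lt_compat_r with (r := G0) in Hmu1; auto.
      replace ((rho - 4 * L / (a * a) * rho) * (a * a) / (4 * G0) * G0) with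
        ((rho - 4 * L / (a*a) * rho) * (a*a) / 4) in Hmu1 by (field; lra). lra. }
    replace (4 * (L * rho + mu * G0) / (a * a)) with (4 * L / (a*a) * rho + 4 * (mu * G0) / (a*a)) by (field; lra).
    assert (4 * (mu * G0) / (a*a) <= rho - 4 * L / (a*a) * rho).
    { apply Rmult_le_reg_r with (a*a); auto.
      replace (4 * (mu * G0) / (a * a) * (a * a)) with (4 * (mu * G0)) by (field; lra). lra. }
    lra.
Qed.
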